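(* Let $q>1$ be a prime number and $k\ge1$. Then $\mathcal{Q}(\mathbf{ŁV}_{q+1}\times\mathbf{ŁV}_2)\subseteq\mathcal{Q}(\mathbf{ŁV}_{k+1})$ if and only if $q\mid k$.
   Context: $\mathbf{ŁV}_{n+1}$ is the MV-algebra (Łukasiewicz chain) on $\{0,\frac1n,\dots,\frac{n-1}n,1\}$ with $\neg x=1-x$, $x\oplus y=\min\{1,x+y\}$; $\mathbf{ŁV}_2$ is the two-element Boolean algebra. For a class (or single algebra) $K$, $\mathcal{Q}(K)$ denotes the quasivariety generated by $K$. *)

(* Defs.v *)
From mathcomp Require Import all_boot.
Set Implicit Arguments. Unset Strict Implicit. Unset Printing Implicit Defensive.

Inductive term : Type :=
| Var of nat
| Zero
| Neg of term
| Oplus of term & term.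

Record alg : Type := Alg {
  carrier :> Type;
  azero : carrier;
  aneg : carrier -> carrier;
  aoplus : carrier -> carrier -> carrier }.

Fixpoint eval (A : alg) (v : nat -> A) (t : term) : A :=
  match t with
  | Var n => v n
  | Zero => @azero A
  | Neg t => @aneg A (@eval A v t)
  | Oplus t u => @aoplus A (@eval A v t) (@eval A v u)
  end.

Record qident : Type := QI { prem : seq (term * term); concl : term * term }.

Fixpoint sat_all (A : alg) (v : nat -> A) (l : seq (term * term)) : Prop :=
  match l with
  | [::] => True
  | p :: l' => eval v p.1 = eval v p.2 /\ sat_all v l'
  end.

Definition holds (A : alg) (q : qident) : Prop :=
  forall v : nat -> A, sat_all v (prem q) -> eval v (concl q).1 = eval v (concl q).2.

Definition Qgen (K : alg -> Prop) (A : alg) : Prop :=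
  forall q : qident, (forall B, K B -> holds B q) -> holds A q.

Definition Qsubset (K1 K2 : alg -> Prop) : Prop :=
  forall A : alg, Qgen K1 A -> Qgen K2 A.

Definition single (B : alg) : alg -> Prop := fun A => A = B.

(* ŁV_{n+1}: element i : 'I_(n+1) represents i/n. *)
Definition LV (n : nat) : alg :=
  @Alg 'I_n.+1 ord0 (fun i => rev_ord i) (fun i j => inord (minn n (i + j))).

Definition prod_alg (A B : alg) : alg :=
  @Alg (A * B)%type (@azero A, @azero B)
       (fun x => (@aneg A x.1, @aneg B x.2))
       (fun x y => (@aoplus A x.1 y.1, @aoplus B x.2 y.2)).

(* Main.v *)
Require Import Defs.
From mathcomp Require Import all_boot.
From mathcomp Require Import zify.
Set Implicit Arguments. Unset Strict Implicit.

Lemma eval_hom (A B : alg) (f : A -> B) :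
  f (@azero A) = @azero B ->
  (forall x, f (@aneg A x) = @aneg B (f x)) ->
  (forall x y, f (@aoplus A x y) = @aoplus B (f x) (f y)) ->
  forall v t, eval (fun n => f (v n)) t = f (eval v t).
Proof.
move=> h0 hn ho v; elim=> [n||t IH|t IHt u IHu] //=.
- by rewrite IH hn.
- by rewrite IHt IHu ho.
Qed.

Lemma hom_holds (A B : alg) (f : A -> B) qi :
  f (@azero A) = @azero B ->
  (forall x, f (@aneg A x) = @aneg B (f x)) ->
  (forall x y, f (@aoplus A x y) = @aoplus B (f x) (f y)) ->
  injective f -> holds B qi -> holds A qi.
Proof.
move=> h0 hn ho inj hB v hv; apply: inj.
rewrite -!(eval_hom h0 hn ho); apply: hB.
elim: (prem qi) hv => [|p l IH] //= [e hl]; split; last exact: IH.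
by rewrite !(eval_hom h0 hn ho) e.
Qed.

Lemma eval_pair (A B : alg) (v : nat -> prod_alg A B) t :
  eval v t = (eval (fun n => (v n).1) t, eval (fun n => (v n).2) t).
Proof.
elim: t => [n||t IH|t IHt u IHu] //=; first by case: (v n).
- by rewrite IH.
- by rewrite IHt IHu.
Qed.

Lemma prod_holds (A B : alg) qi : holds A qi -> holds B qi -> holds (prod_alg A B) qi.
Proof.
move=> hA hB v hv; rewrite !eval_pair; congr pair; [apply: hA|apply: hB];
elim: (prem qi) hv => [|p l IH] //= [e hl]; (split; last exact: IH);
by move: e; rewrite !eval_pair => -[].
Qed.

Ltac ordtac := rewrite ?subSS ltnS leq_mul2r ?leq_ord ?leq_subr ?geq_minl ?orbT.

Lemma LV_embed m c qi : 0 < c -> holds (LV (m * c)) qi -> holds (LV m) qi.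
Proof.
move=> c0; apply: (@hom_holds (LV m) (LV (m * c)) (fun i => inord (i * c))).
- by apply: val_inj; rewrite /= inordK //= mul0n.
- move=> x; apply: val_inj; rewrite /= !inordK /=; try by ordtac.
  by rewrite !subSS mulnBl.
- move=> x y; apply: val_inj; rewrite /= !inordK /=; try by ordtac.
  all: first [by rewrite -mulnDl minnMl | by rewrite ltnS geq_minl | idtac].
- move=> x y /(congr1 val); rewrite /= !inordK; try by ordtac.
  by move/eqP; rewrite eqn_mul2r eqn0Ngt c0 /= => /eqP/val_inj.
Qed.

Fixpoint mult (n : nat) (t : term) : term :=
  match n with 0 => Zero | n'.+1 => Oplus t (mult n' t) end.

Lemma mult_val k (v : nat -> LV k) n t :
  val (eval v (mult n t) : LV k) = minn k (n * val (eval v t : LV k)).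
Proof.
elim: n => [|n IH] /=; first by rewrite mul0n; lia.
rewrite inordK; last by rewrite ltnS geq_minl.
rewrite IH mulSn; set m := n * _; lia.
Qed.

Definition qi (q : nat) : qident :=
  QI [:: (Oplus (Var 1) (Var 1), Var 1);
         (Oplus (mult q.-1 (Var 0)) (Var 1), Oplus (Neg (Var 0)) (Var 1))]
     (Var 1, Neg Zero).

Lemma qi_valid q k : prime q -> 1 <= k -> ~~ (q %| k) -> holds (LV k) (qi q).
Proof.
move=> pq k1 nd v /= [h1 [h2 _]].
have q1 : 1 < q by apply: prime_gt1.
move: h1 h2 => /(congr1 val) h1 /(congr1 val) h2.
move: h1 h2; rewrite /= !inordK ?mult_val ?ltnS ?geq_minl //.
set x := val (v 0); set y := val (v 1) => h1 h2.
have hx : x <= k by rewrite /x -ltnS ltn_ord.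
have hy : y <= k by rewrite /y -ltnS ltn_ord.
set m := q.-1 * x in h2.
have hm : q * x = x + m by rewrite /m -mulSn prednK // ltnW.
have hx0 : x = 0 -> m = 0 by rewrite /m => ->; rewrite muln0.
have ex : nat_of_ord (v 0) = x by [].
have ey : nat_of_ord (v 1) = y by [].
rewrite subSS ex in h2.
clearbody x y m.
have : y = k \/ k = q * x by lia.
case=> [eyk|ek]; first by apply: val_inj; rewrite /= ey; lia.
by exfalso; move/negP: nd; apply; rewrite ek dvdn_mulr.
Qed.

Lemma qi_fails q : prime q -> ~ holds (prod_alg (LV q) (LV 1)) (qi q).
Proof.
move=> pq H.
have q1 : 1 < q by apply: prime_gt1.
pose v := fun n : nat => if n == 0 then ((inord 1 : LV q), (ord0 : LV 1)) : prod_alg (LV q) (LV 1)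
                          else ((ord0 : LV q), (ord_max : LV 1)).
have := H v.
rewrite /= !eval_pair /=.
move=> H'.
have e : v 1 = (rev_ord ord0, rev_ord ord0).
  apply: H'; rewrite /v /=; split; last split => //.
  - congr pair; apply: val_inj; rewrite /= inordK //= ?ltnS; lia.
  - congr pair; apply: val_inj; rewrite /= !inordK ?mult_val ?ltnS ?geq_minl //=
      ?inordK //=; lia.
move/(congr1 (fun p => val p.1)): e; rewrite /v /=; lia.
Qed.

Theorem corollary5p4 (q k : nat) (hq : prime q) (hk : 1 <= k) :
  Qsubset (single (prod_alg (LV q) (LV 1))) (single (LV k)) <-> q %| k.
Proof.
split.
- move=> hsub; apply/negPn/negP => nd.
  have hP : Qgen (single (prod_alg (LV q) (LV 1))) (prod_alg (LV q) (LV 1)).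
    by move=> qq h; apply: h.
  apply: (qi_fails hq); apply: (hsub _ hP) => B ->.
  exact: qi_valid.
- case/dvdnP => c ek A hA qq hv; apply: hA => B ->.
  have hk' := hv _ erefl.
  apply: prod_holds.
  + have c0 : 0 < c by case: c ek => [|c] // ek; move: hk; rewrite ek.
    by move: hk'; rewrite ek mulnC; apply: LV_embed.
  + by move: hk'; rewrite -(mul1n k); apply: LV_embed.
Qed.
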